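(* Let $(E_n)_{n\in\mathbb Z}$ be the integer sequence with $E_0=0$, $E_1=E_2=1$ and $E_n+E_{n+2}=E_{n+3}$ for all $n\in\mathbb Z$, and for $i,j\in\mathbb Z$ let $\Delta_{i,j}=E_iE_{i+j-1}-E_{i+j}E_{i-1}$. Then: (a) for every fixed $i\in\mathbb Z$, $\Delta_{i,j-3}+\Delta_{i,j-1}=\Delta_{i,j}$ for all $j\in\mathbb Z$, with $\Delta_{i,1}=E_i^2-E_{i-1}E_{i+1}$, $\Delta_{i,2}=E_iE_{i+1}-E_{i-1}E_{i+2}$, $\Delta_{i,3}=E_iE_{i+2}-E_{i-1}E_{i+3}$, and $\Delta_{i,2}=\Delta_{i,3}$; (b) for every fixed $j\in\mathbb Z$, $\Delta_{i+2,j}+\Delta_{i,j}=\Delta_{i-1,j}$ for all $i\in\mathbb Z$, with $\Delta_{1,j}=E_j$, $\Delta_{2,j}=-E_{j-1}$, $\Delta_{3,j}=-E_j$.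
   Context: $\Delta_{i,j}$ equals the determinant $\det\begin{pmatrix}E_n & E_{n-1} & E_{n+1}\\ E_{n+i} & E_{n+i-1} & E_{n+i+1}\\ E_{n+i+j} & E_{n+i+j-1} & E_{n+i+j+1}\end{pmatrix}$ for any $n\in\mathbb Z$. *)

(* Defs.v *)
From Stdlib Require Import ZArith Lia.
Open Scope Z_scope.

Definition Delta (E : Z -> Z) (i j : Z) : Z :=
  E i * E (i + j - 1) - E (i + j) * E (i - 1).

(* Main.v *)
Require Import Defs.
From Stdlib Require Import ZArith Lia.
Open Scope Z_scope.

Definition D (E : Z -> Z) (p q r : Z) : Z :=
  E p * (E (q-1) * E (r+1) - E (q+1) * E (r-1))
  - E (p-1) * (E q * E (r+1) - E (q+1) * E r)
  + E (p+1) * (E q * E (r-1) - E (q-1) * E r).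

Theorem theorem16 (E : Z -> Z)
  (h0 : E 0 = 0) (h1 : E 1 = 1) (h2 : E 2 = 1)
  (hrec : forall n : Z, E n + E (n + 2) = E (n + 3)) :
  (forall i : Z,
     (forall j : Z, Delta E i (j - 3) + Delta E i (j - 1) = Delta E i j)
     /\ Delta E i 1 = E i ^ 2 - E (i - 1) * E (i + 1)
     /\ Delta E i 2 = E i * E (i + 1) - E (i - 1) * E (i + 2)
     /\ Delta E i 3 = E i * E (i + 2) - E (i - 1) * E (i + 3)
     /\ Delta E i 2 = Delta E i 3)
  /\
  (forall j : Z,
     (forall i : Z, Delta E (i + 2) j + Delta E i j = Delta E (i - 1) j)
     /\ Delta E 1 j = E j
     /\ Delta E 2 j = - E (j - 1)
     /\ Delta E 3 j = - E j).
Proof.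
  assert (hr : forall a b c, b = a + 2 -> c = a + 3 -> E c = E a + E b).
  { intros a b c -> ->. rewrite hrec. reflexivity. }
  assert (hm1 : E (-1) = 0).
  { pose proof (hr (-1) 1 2 ltac:(lia) ltac:(lia)). lia. }
  assert (hshift1 : forall p q r, D E (p+1) (q+1) (r+1) = D E p q r).
  { intros p q r. unfold D.
    replace (p+1-1) with p by ring. replace (q+1-1) with q by ring.
    replace (r+1-1) with r by ring.
    rewrite (hr (p-1) (p+1) (p+1+1)) by lia.
    rewrite (hr (q-1) (q+1) (q+1+1)) by lia.
    rewrite (hr (r-1) (r+1) (r+1+1)) by lia. ring. }
  assert (hshift : forall k p q r, D E (p+k) (q+k) (r+k) = D E p q r).
  { intro k. induction k using Z.peano_ind; intros p q r.
    - rewrite !Z.add_0_r. reflexivity.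
    - replace (p + Z.succ k) with (p + k + 1) by lia.
      replace (q + Z.succ k) with (q + k + 1) by lia.
      replace (r + Z.succ k) with (r + k + 1) by lia.
      rewrite hshift1. apply IHk.
    - rewrite <- (IHk p q r).
      replace (p + k) with (p + Z.pred k + 1) by lia.
      replace (q + k) with (q + Z.pred k + 1) by lia.
      replace (r + k) with (r + Z.pred k + 1) by lia.
      rewrite hshift1. reflexivity. }
  assert (hDelta : forall i j, Delta E i j = D E (-i) 0 j).
  { intros i j. rewrite <- (hshift i). unfold D, Delta.
    replace (-i+i) with 0 by ring. replace (0-1) with (-1) by ring.
    replace (0+1) with 1 by ring. rewrite h0, h1, hm1.
    replace (0+i) with i by ring. replace (j+i-1) with (i+j-1) by ring.
    replace (j+i) with (i+j) by ring. replace (j+i+1) with (i+j+1) by ring.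
    ring. }
  assert (hlin : forall p q r, D E (p+3) q r = D E (p+2) q r + D E p q r).
  { intros p q r. unfold D.
    rewrite (hr p (p+2) (p+3)) by lia.
    rewrite (hr (p-1) (p+2-1) (p+3-1)) by lia.
    rewrite (hr (p+1) (p+2+1) (p+3+1)) by lia. ring. }
  split.
  - intro i. repeat split.
    + intro j. unfold Delta.
      rewrite (hr (i+(j-3)-1) (i+(j-1)-1) (i+j-1)) by lia.
      rewrite (hr (i+(j-3)) (i+(j-1)) (i+j)) by lia.
      replace (i + (j-3) - 1 + 2) with (i+(j-1)-1) by ring. ring.
    + unfold Delta. replace (i+1-1) with i by ring. ring.
    + unfold Delta. replace (i+2-1) with (i+1) by ring. ring.
    + unfold Delta. replace (i+3-1) with (i+2) by ring. ring.
    + unfold Delta. replace (i+2-1) with (i+1) by ring. replace (i+3-1) with (i+2) by ring.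
      rewrite (hr i (i+2) (i+3)) by lia.
      rewrite (hr (i-1) (i+1) (i+2)) by lia. ring.
  - intro j. repeat split.
    + intro i. rewrite !hDelta.
      replace (- (i-1)) with ((-(i+2))+3) by ring.
      replace (-i) with ((-(i+2))+2) by ring. rewrite hlin. ring.
    + unfold Delta. replace (1+j-1) with j by ring. replace (1-1) with 0 by ring.
      rewrite h0, h1. ring.
    + unfold Delta. replace (2-1) with 1 by ring. rewrite h1, h2.
      rewrite (hr (j-1) (2+j-1) (2+j)) by lia. ring.
    + unfold Delta. replace (3-1) with 2 by ring. rewrite h2.
      rewrite (hr 0 2 3) by lia. rewrite h0, h2.
      rewrite (hr j (3+j-1) (3+j)) by lia. ring.
Qed.
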